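(* Let $(\mathfrak{g},\langle\cdot,\cdot\rangle)$ be a $3$-dimensional Lie algebra with a Lorentzian scalar product, and let $\mathfrak{h}$ be a codimension one Lie subalgebra. Then: (i) if $\mathfrak{h}$ is abelian, $(\langle\cdot,\cdot\rangle,\mathfrak{h})$ is a Kundt pair if and only if $\mathfrak{h}$ is degenerate and $\mathrm{ad}_e(\mathfrak{g})\subset\mathfrak{h}$ for a generator $e$ of $\mathfrak{h}^\perp$; (ii) if $\mathfrak{h}$ is non-abelian, $(\langle\cdot,\cdot\rangle,\mathfrak{h})$ is a Kundt pair if and only if $\mathfrak{h}^\perp=[\mathfrak{h},\mathfrak{h}]$ and $\mathrm{ad}_e(\mathfrak{g})\subset\mathfrak{h}$ for a generator $e$ of $\mathfrak{h}^\perp$.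
   Context: The Levi-Civita product on $(\mathfrak{g},\langle\cdot,\cdot\rangle)$ is defined by $2\langle u\bullet v,w\rangle=\langle[u,v],w\rangle+\langle[w,u],v\rangle+\langle[w,v],u\rangle$. A Kundt pair on $\mathfrak{g}$ is a pair $(\langle\cdot,\cdot\rangle,\mathfrak{h})$ where $\langle\cdot,\cdot\rangle$ is a Lorentzian scalar product on $\mathfrak{g}$ and $\mathfrak{h}$ is a codimension one subalgebra, degenerate for $\langle\cdot,\cdot\rangle$, stable by $\bullet$ ($u\bullet v\in\mathfrak{h}$ for $u,v\in\mathfrak{h}$), and such that $e\bullet e=0$ for every $e\in\mathfrak{h}^\perp$. *)

(* Defs.v *)
(* A 3-dimensional real Lie algebra is modelled as the row
   space 'rV[R]_3 (R : realType) with a bilinear alternating bracket satisfying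
   Jacobi; the scalar product is given by a symmetric Gram matrix G; a
   subspace h is given by a matrix H (row space, mxalgebra). *)
From HB Require Import structures.
From mathcomp Require Import all_boot all_order all_algebra.
From mathcomp Require Import reals.
Set Implicit Arguments. Unset Strict Implicit. Unset Printing Implicit Defensive.
Import Order.TTheory GRing.Theory Num.Theory.
Local Open Scope ring_scope.

Section Defs.
Variable R : realType.
Notation vec := 'rV[R]_3.

Definition is_lie_bracket (br : vec -> vec -> vec) : Prop :=
  [/\ (forall (a : R) u v w, br (a *: u + v) w = a *: br u w + br v w),
      (forall (a : R) u v w, br w (a *: u + v) = a *: br w u + br w v),
      (forall u, br u u = 0) &
      (forall u v w, br u (br v w) + br v (br w u) + br w (br u v) = 0)].

Definition bform (G : 'M[R]_3) (u v : vec) : R := (u *m G *m v^T) 0 0.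

Definition lorentzian (G : 'M[R]_3) : Prop :=
  G^T = G /\ exists P : 'M[R]_3, P \in unitmx /\
     P *m G *m P^T = diag_mx (\row_(i < 3) (if i == 0 :> nat then -1 else 1)).

Definition in_sub (H : 'M[R]_3) (u : vec) : Prop := (u <= H)%MS.

Definition subalgebra (br : vec -> vec -> vec) (H : 'M[R]_3) : Prop :=
  forall u v, in_sub H u -> in_sub H v -> in_sub H (br u v).

Definition codim_one (H : 'M[R]_3) : Prop := \rank H = 2%N.

Definition abelian_sub (br : vec -> vec -> vec) (H : 'M[R]_3) : Prop :=
  forall u v, in_sub H u -> in_sub H v -> br u v = 0.

Definition degenerate (G H : 'M[R]_3) : Prop :=
  exists u, u != 0 /\ in_sub H u /\ forall v, in_sub H v -> bform G u v = 0.

Definition in_perp (G H : 'M[R]_3) (w : vec) : Prop :=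
  forall v, in_sub H v -> bform G w v = 0.

(* derived algebra [h,h]: span of brackets of a spanning family (the rows of H) *)
Definition derived (br : vec -> vec -> vec) (H : 'M[R]_3) : 'M[R]_3 :=
  (\sum_(i < 3) \sum_(j < 3) <<br (row i H) (row j H)>>)%MS.

Definition perp_generator (G H : 'M[R]_3) (e : vec) : Prop :=
  [/\ e != 0, in_perp G H e & forall w, in_perp G H w -> exists a : R, w = a *: e].

Definition ad_in (br : vec -> vec -> vec) (H : 'M[R]_3) (e : vec) : Prop :=
  forall x, in_sub H (br e x).

(* Levi-Civita product: the unique x with
   2<x,w> = <[u,v],w> + <[w,u],v> + <[w,v],u> for all w (G nondegenerate). *)
Definition lcprod (br : vec -> vec -> vec) (G : 'M[R]_3) (u v : vec) : vec :=
  (\row_(j < 3) ((bform G (br u v) (delta_mx 0 j)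
                 + bform G (br (delta_mx 0 j) u) v
                 + bform G (br (delta_mx 0 j) v) u) / 2)) *m invmx G.

Definition kundt_pair (br : vec -> vec -> vec) (G H : 'M[R]_3) : Prop :=
  lorentzian G /\ codim_one H /\ subalgebra br H /\ degenerate G H /\
  (forall u v, in_sub H u -> in_sub H v -> in_sub H (lcprod br G u v)) /\
  (forall e, in_perp G H e -> lcprod br G e e = 0).

End Defs.

(* Main.v *)
Require Import Defs.
From HB Require Import structures.
From mathcomp Require Import all_boot all_order all_algebra.
From mathcomp Require Import reals.
From mathcomp Require Import ring lra.
Set Implicit Arguments. Unset Strict Implicit. Unset Printing Implicit Defensive.
Import Order.TTheory GRing.Theory Num.Theory.
Local Open Scope ring_scope.

Section Helpers.
Variable R : realType.
Notation vec := 'rV[R]_3.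

Lemma bformDl (G : 'M[R]_3) a (u v w : vec) :
  bform G (a *: u + v) w = a * bform G u w + bform G v w.
Proof. by rewrite /bform !mulmxDl -!scalemxAl !mxE. Qed.

Lemma bformDr (G : 'M[R]_3) a (u v w : vec) :
  bform G w (a *: u + v) = a * bform G w u + bform G w v.
Proof. by rewrite /bform linearD linearZ /= mulmxDr -scalemxAr !mxE. Qed.

Lemma bform_sym (G : 'M[R]_3) (u v : vec) : G^T = G -> bform G u v = bform G v u.
Proof.
move=> sG; rewrite /bform.
have h (M : 'M[R]_1) : M 0 0 = M^T 0 0 by rewrite mxE.
by rewrite [LHS]h !trmx_mul trmxK sG mulmxA.
Qed.

Lemma in_perpE (G H : 'M[R]_3) (w : vec) :
  in_perp G H w <-> w *m G *m H^T = 0.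
Proof.
split.
- move=> hw; apply/rowP => j.
  rewrite [RHS]mxE -(hw _ (row_sub j H)) /bform !mxE.
  by apply: eq_bigr => k _; rewrite !mxE.
- move=> hw v /submxP [D ->]; rewrite /bform trmx_mul mulmxA hw mul0mx mxE //.
Qed.


Lemma lor_unit (G : 'M[R]_3) : lorentzian G -> G \in unitmx.
Proof.
case=> _ [P [uP eq]].
have: P *m G *m P^T \in unitmx.
  rewrite eq unitmxE det_diag !big_ord_recl big_ord0 !mxE /=.
  by rewrite !mulr1 unitrN unitr1.
by rewrite !unitmx_mul => /andP[/andP[_ ->]].
Qed.

Lemma nondeg (G : 'M[R]_3) (x : vec) : G \in unitmx ->
  (forall w, bform G x w = 0) -> x = 0.
Proof.
move=> uG hx.
have : in_perp G 1%:M x by move=> v _; exact: hx.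
move/in_perpE; rewrite trmx1 mulmx1 => h.
by rewrite -(mulmxK uG x) h mul0mx.
Qed.

Lemma lin_sum (f : vec -> R) : (forall a x y, f (a *: x + y) = a * f x + f y) ->
  forall (c : 'I_3 -> R) (d : 'I_3 -> vec), f (\sum_j c j *: d j) = \sum_j c j * f (d j).
Proof.
move=> hf c d.
have h0 : f 0 = 0.
  have := hf 1 0 0; rewrite scale1r addr0 mul1r => h.
  by apply: (addrI (f 0)); rewrite addr0 -h.
elim/big_rec2: _ => [//|j s1 s2 _ <-]; exact: hf.
Qed.

End Helpers.

Section Main.
Variable R : realType.
Notation vec := 'rV[R]_3.
Variable br : vec -> vec -> vec.
Hypothesis hbr : is_lie_bracket br.

Lemma brDlZ a u v w : br (a *: u + v) w = a *: br u w + br v w.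
Proof. by case: hbr. Qed.
Lemma brDrZ a u v w : br w (a *: u + v) = a *: br w u + br w v.
Proof. by case: hbr. Qed.
Lemma brxx u : br u u = 0.
Proof. by case: hbr. Qed.

Lemma br0l w : br 0 w = 0.
Proof.
have := brDlZ 1 0 0 w; rewrite !scale1r addr0 => h.
by apply: (addrI (br 0 w)); rewrite addr0 -h.
Qed.
Lemma br0r w : br w 0 = 0.
Proof.
have := brDrZ 1 0 0 w; rewrite !scale1r addr0 => h.
by apply: (addrI (br w 0)); rewrite addr0 -h.
Qed.
Lemma brDl u v w : br (u + v) w = br u w + br v w.
Proof. by rewrite -(scale1r u) brDlZ !scale1r. Qed.
Lemma brDr u v w : br w (u + v) = br w u + br w v.
Proof. by rewrite -(scale1r u) brDrZ !scale1r. Qed.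
Lemma brZl a u w : br (a *: u) w = a *: br u w.
Proof. by rewrite -(addr0 (a *: u)) brDlZ br0l addr0. Qed.
Lemma brZr a u w : br w (a *: u) = a *: br w u.
Proof. by rewrite -(addr0 (a *: u)) brDrZ br0r addr0. Qed.
Lemma brC u v : br u v = - br v u.
Proof.
have := brxx (u + v); rewrite brDl !brDr !brxx add0r addr0 => /eqP.
by rewrite addr_eq0 => /eqP.
Qed.

Lemma lcE (G : 'M[R]_3) u v w : G \in unitmx ->
  bform G (lcprod br G u v) w =
  (bform G (br u v) w + bform G (br w u) v + bform G (br w v) u) / 2.
Proof.
move=> uG.
pose f := fun w => (bform G (br u v) w + bform G (br w u) v + bform G (br w v) u) / 2.
have hf : forall a x y, f (a *: x + y) = a * f x + f y.
  move=> a x y; rewrite /f bformDr !brDlZ !bformDl; by field.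
have -> : (bform G (br u v) w + bform G (br w u) v + bform G (br w v) u) / 2 = f w by [].
rewrite (_ : f w = f (\sum_j w 0 j *: 'e_j)); last by rewrite -row_sum_delta.
rewrite lin_sum //.
rewrite /lcprod /bform mulmxKV // mxE.
apply: eq_bigr => k _; rewrite mulrC; congr (_ * _); rewrite mxE //.
Qed.

End Main.

Section Perp.
Variable R : realType.
Notation vec := 'rV[R]_3.
Variables G H : 'M[R]_3.
Hypothesis uG : G \in unitmx.
Hypothesis sG : G^T = G.
Hypothesis rH : \rank H = 2%N.

Lemma bformZr a (u w : vec) : bform G w (a *: u) = a * bform G w u.
Proof. by rewrite /bform linearZ /= -scalemxAr mxE. Qed.
Lemma bformZl a (u w : vec) : bform G (a *: u) w = a * bform G u w.
Proof. by rewrite /bform -!scalemxAl mxE. Qed.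

Definition Kp := kermx (G *m H^T).

Lemma perpK (w : vec) : in_perp G H w <-> (w <= Kp)%MS.
Proof. by rewrite in_perpE /Kp sub_kermx mulmxA; split => [->|/eqP]. Qed.

Lemma rankGA m (A : 'M[R]_(3, m)) : \rank (G *m A) = \rank A.
Proof. by rewrite (eqmxMfull _ _) // row_full_unit. Qed.

Lemma rankK : \rank Kp = 1%N.
Proof. by rewrite /Kp mxrank_ker rankGA mxrank_tr rH. Qed.

Definition egen : vec := nz_row Kp.

Lemma egen_gen : perp_generator G H egen.
Proof.
have Kn0 : Kp != 0 by rewrite -mxrank_eq0 rankK.
have eK : (egen <= Kp)%MS by exact: nz_row_sub.
have en0 : egen != 0 by rewrite nz_row_eq0.
split => //; first by apply/perpK.
move=> w /perpK wK.
have := mxrank_leqif_eq eK; rewrite rank_rV en0 rankK => /leqif_refl /andP[_ Ke].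
have /submxP [D ->] := submx_trans wK Ke.
by exists (D 0 0); rewrite {1}[D]mx11_scalar mul_scalar_mx.
Qed.

Lemma subH_perp (x : vec) :
  in_sub H x <-> (forall w, in_perp G H w -> bform G x w = 0).
Proof.
split.
- by move=> hx w hw; rewrite bform_sym //; apply: hw.
- move=> hx.
  have hK : in_perp G Kp x by move=> v /perpK hv; apply: hx.
  move/in_perpE: hK => hK.
  have HL : (H <= kermx (G *m Kp^T))%MS.
    rewrite sub_kermx; apply/eqP.
    have hk : Kp *m (G *m H^T) = 0 by exact: mulmx_ker.
    move: hk; move: Kp => K hk.
    by apply: trmx_inj; rewrite trmx0 !trmx_mul trmxK sG -mulmxA hk.
  have := mxrank_leqif_eq HL; rewrite mxrank_ker rankGA mxrank_tr rankK rH.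
  move=> /leqif_refl /andP[_ LH].
  apply: submx_trans LH; rewrite sub_kermx mulmxA hK //.
Qed.

Lemma subH_gen (e x : vec) : perp_generator G H e ->
  in_sub H x <-> bform G x e = 0.
Proof.
case=> en0 pe ge; split.
- by move/subH_perp => h; apply: h.
- move=> hx; apply/subH_perp => w /ge [a ->].
  by rewrite bformZr hx mulr0.
Qed.

Lemma mx1_scale (D : 'M[R]_1) (v : vec) : D *m v = D 0 0 *: v.
Proof. by rewrite {1}[D]mx11_scalar mul_scalar_mx. Qed.

Lemma span2 (e u : vec) : e != 0 -> in_sub H e -> in_sub H u -> ~~ (u <= e)%MS ->
  forall w, in_sub H w -> exists a b : R, w = a *: e + b *: u.
Proof.
move=> en0 eH uH nue w wH.
have := mxrank_leqif_sup (addsmxSl e u).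
rewrite addsmx_sub submx_refl (negbTE nue) /= => /ltn_leqif /= lt1.
have sH : ((e + u)%MS <= H)%MS by rewrite addsmx_sub; apply/andP.
have := mxrank_leqif_eq sH; rewrite rH.
move=> le2.
have eq2 : \rank (e + u)%MS = 2%N.
  apply/eqP; rewrite eqn_leq le2 /=.
  by move: lt1; rewrite rank_rV en0.
move: le2; rewrite eq2 => /leqif_refl /andP[_ Hs].
have /sub_addsmxP [[D1 D2] /= ->] := submx_trans wH Hs.
by exists (D1 0 0), (D2 0 0); rewrite !mx1_scale.
Qed.

End Perp.

Section Theory.
Variable R : realType.
Notation vec := 'rV[R]_3.
Variable br : vec -> vec -> vec.
Hypothesis hbr : is_lie_bracket br.
Variables G H : 'M[R]_3.
Hypothesis hG : lorentzian G.
Hypothesis hH : codim_one H.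
Hypothesis hsub : subalgebra br H.

Let uG : G \in unitmx := lor_unit hG.
Let sG : G^T = G := proj1 hG.

Lemma bform0l (w : vec) : bform G 0 w = 0.
Proof. by rewrite /bform !mul0mx mxE. Qed.
Lemma bformNl (u w : vec) : bform G (- u) w = - bform G u w.
Proof. by rewrite /bform !mulNmx mxE. Qed.

Lemma perp_scale a (x : vec) : in_perp G H x -> in_perp G H (a *: x).
Proof. by move=> hx v hv; rewrite bformZl hx // mulr0. Qed.

Lemma perp0 : in_perp G H 0.
Proof. by move=> v _; rewrite bform0l. Qed.

Lemma br_suml (c : 'I_3 -> R) (d : 'I_3 -> vec) w :
  br (\sum_i c i *: d i) w = \sum_i c i *: br (d i) w.
Proof.
elim/big_rec2: _ => [|i s1 s2 _ <-]; first by rewrite /= (br0l hbr).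
by rewrite /= (brDlZ hbr).
Qed.
Lemma br_sumr (c : 'I_3 -> R) (d : 'I_3 -> vec) w :
  br w (\sum_i c i *: d i) = \sum_i c i *: br w (d i).
Proof.
elim/big_rec2: _ => [|i s1 s2 _ <-]; first by rewrite /= (br0r hbr).
by rewrite /= (brDrZ hbr).
Qed.

Lemma br_derived u v : in_sub H u -> in_sub H v -> (br u v <= derived br H)%MS.
Proof.
move=> /submxP [D1 ->] /submxP [D2 ->].
rewrite !mulmx_sum_row br_suml.
apply: summx_sub => i _; apply: scalemx_sub.
rewrite br_sumr; apply: summx_sub => j _; apply: scalemx_sub.
apply: (sumsmx_sup i) => //; apply: (sumsmx_sup j) => //.
by rewrite genmxE.
Qed.

Lemma derived_sub : (derived br H <= H)%MS.
Proof.
apply/sumsmx_subP => i _; apply/sumsmx_subP => j _.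
by rewrite genmxE; apply: hsub; apply: row_sub.
Qed.

Lemma degen_iff e : perp_generator G H e -> degenerate G H <-> in_sub H e.
Proof.
case=> en0 pe ge; split.
- case=> u [un0 [uH up]].
  have [a ua] := ge u up.
  have an0 : a != 0.
    by apply: contraNneq un0 => a0; rewrite ua a0 scale0r.
  by rewrite -(scalerK an0 e) -ua; apply: scalemx_sub.
- by move=> eH; exists e.
Qed.

Lemma N_iff e : perp_generator G H e ->
  (forall e', in_perp G H e' -> lcprod br G e' e' = 0) <-> ad_in br H e.
Proof.
case=> en0 pe ge; split.
- move=> hN x; apply/(@subH_gen _ G H uG sG hH e _ (And3 en0 pe ge)).
  have := lcE hbr e e x uG; rewrite (hN e pe) (brxx hbr) !bform0l add0r.
  rewrite (brC hbr) bformNl => /esym /eqP; rewrite mulf_eq0 invr_eq0 pnatr_eq0 orbF.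
  by rewrite -mulr2n mulrn_eq0 /= oppr_eq0 => /eqP.
- move=> had e' /ge [a ->].
  apply: (nondeg uG) => w; rewrite lcE // (brxx hbr) bform0l add0r.
  rewrite (brC hbr) bformNl bform_sym // (brZl hbr).
  have : in_sub H (a *: br e w) by apply: scalemx_sub; apply: had.
  move=> h; rewrite (perp_scale a pe h).
  by rewrite oppr0 addr0 mul0r.
Qed.

Lemma E_elem e u v : perp_generator G H e -> in_sub H u -> in_sub H v ->
  in_sub H (lcprod br G u v) <-> bform G (br e u) v + bform G (br e v) u = 0.
Proof.
move=> ge uH vH; rewrite (@subH_gen _ G H uG sG hH e _ ge) lcE //.
have -> : bform G (br u v) e = 0.
  by rewrite bform_sym //; case: ge => _ pe _; apply: pe; apply: hsub.
rewrite add0r.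
split => [/eqP|->]; last by rewrite mul0r.
by rewrite mulf_eq0 invr_eq0 pnatr_eq0 orbF => /eqP.
Qed.

End Theory.

Theorem proposition5p1 (R : realType) (br : 'rV[R]_3 -> 'rV[R]_3 -> 'rV[R]_3)
  (G H : 'M[R]_3) :
  is_lie_bracket br -> lorentzian G -> codim_one H -> subalgebra br H ->
  (abelian_sub br H ->
     (kundt_pair br G H <->
      degenerate G H /\ exists e, perp_generator G H e /\ ad_in br H e)) /\
  (~ abelian_sub br H ->
     (kundt_pair br G H <->
      (forall w, in_perp G H w <-> (w <= derived br H)%MS) /\
      exists e, perp_generator G H e /\ ad_in br H e)).
Proof.
move=> hbr hG hH hsub.
have uG := lor_unit hG.
have sG := proj1 hG.
have gen0 := egen_gen uG hH.
set e := egen G H in gen0.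
have NI := N_iff hbr hG hH.
have EI := E_elem hbr hG hH hsub.
split.
- move=> hab; split.
  + case=> _ [_ [_ [hdeg [_ hN]]]]; split => //.
    by exists e; split => //; apply/(NI _ gen0).
  + case=> hdeg [e' [ge' had]].
    have eH : in_sub H e' by apply/(degen_iff ge').
    do 4 (split; first by []).
    split.
    * move=> u v uH vH; apply/(EI _ _ _ ge' uH vH).
      by rewrite (hab e' u eH uH) (hab e' v eH vH) !bform0l addr0.
    * by apply/(NI _ ge').
- move=> hnab; split.
  + case=> _ [_ [_ [hdeg [hE hN]]]].
    have eH : in_sub H e by apply/(degen_iff gen0).
    have had : ad_in br H e by apply/(NI _ gen0).
    case: (gen0) => en0 pe ge.
    have P1 : forall u, in_sub H u -> in_perp G H (br e u).
      move=> u uH; case: (boolP (u <= e)%MS) => [/submxP [D ->]|nue].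
        rewrite mx1_scale (brZr hbr) (brxx hbr) scaler0; exact: perp0.
      move=> w wH; have [a [b ->]] := span2 hH en0 eH uH nue wH.
      rewrite bformDr !bformZr.
      have -> : bform G (br e u) e = 0.
        by rewrite bform_sym //; apply: pe; apply: hsub.
      have -> : bform G (br e u) u = 0.
        have := hE u u uH uH; move/(EI _ _ _ gen0 uH uH) => h.
        lra.
      by rewrite !mulr0 addr0.
    have P2 : forall u v, in_sub H u -> in_sub H v -> in_perp G H (br u v).
      move=> u v uH vH; case: (boolP (u <= e)%MS) => [/submxP [D ->]|nue].
        rewrite mx1_scale (brZl hbr); apply: perp_scale; exact: P1.
      have [a [b ->]] := span2 hH en0 eH uH nue vH.
      rewrite (brDr hbr) !(brZr hbr) (brxx hbr) scaler0 addr0 (brC hbr).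
      rewrite scalerN -scaleNr; apply: perp_scale; exact: P1.
    split; last by exists e.
    have ed : (e <= derived br H)%MS.
      case: (boolP (e <= derived br H)%MS) => // nd; exfalso.
      apply: hnab => u v uH vH.
      have [a ha] := ge _ (P2 u v uH vH).
      have bd := br_derived hbr uH vH.
      case: (eqVneq a 0) => [a0|an0]; first by rewrite ha a0 scale0r.
      case/negP: nd; rewrite -(scalerK an0 e) -ha.
      by apply: scalemx_sub.
    have dK : (derived br H <= Kp G H)%MS.
      apply/sumsmx_subP => i _; apply/sumsmx_subP => j _.
      by rewrite genmxE; apply/perpK; apply: P2; apply: row_sub.
    move=> w; split.
    * by move=> /ge [a ->]; apply: scalemx_sub.
    * by move=> wd; apply/perpK; apply: submx_trans dK.
  + case=> hd [e' [ge' had]].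
    have eH : in_sub H e'.
      case: (ge') => en0 pe _.
      by apply: submx_trans (derived_sub hsub); apply/hd.
    do 3 (split; first by []).
    split; first by apply/(degen_iff ge').
    split.
    * move=> u v uH vH; apply/(EI _ _ _ ge' uH vH).
      have p1 : in_perp G H (br e' u) by apply/hd; apply: br_derived.
      have p2 : in_perp G H (br e' v) by apply/hd; apply: br_derived.
      by rewrite p1 // p2 // addr0.
    * by apply/(NI _ ge').
Qed.
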